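(* Consider the unit-demand Euclidean CVRP with any set $V$ of $n$ terminals in $\mathbb{R}^2$, any depot $O\in\mathbb{R}^2$ and any capacity $k\in\mathbb{N}^+$. For any positive integer $M$, let $\mathrm{sol}(M)$ be the cost of the solution returned by the Sweep-Arora algorithm with parameter $M$ (described in the context). Then \[\mathrm{sol}(M)\le\left(1+\frac1M\right)\left(T^*_0+\mathrm{rad}_\infty+\frac{3\pi D}{2}\left\lceil\frac{n}{Mk}\right\rceil\right),\] where $D$ is the diameter of $V\cup\{O\}$.
   Context: Unit-demand Euclidean CVRP: a solution is a set of tours, each a closed curve starting and ending at $O$ visiting at most $k$ terminals, every terminal visited by some tour; cost is total Euclidean length. Sweep-Arora algorithm with parameter $M$: let $\theta(v)\in[0,2\pi)$ be the polar angle of terminal $v$ w.r.t. $O$; sort terminals as $u_1,\dots,u_n$ with $\theta(u_1)\le\cdots\le\theta(u_n)$; for $i=1,\dots,\lceil n/(Mk)\rceil$ put $V_i=\{u_j:(i-1)Mk<j\le iMk\}$ and let $S_i$ be a $(1+\frac1M)$-approximate solution of the CVRP instance $(V_i,O,k)$; output the union of the $S_i$. Here $\mathrm{rad}_\infty:=\frac2k\sum_{v\in V}d(O,v)$ and $T^*_0$ is the minimum length of a traveling salesman tour on $V$. *)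

(* Defs.v *)
From Stdlib Require Import Reals Lra Lia List Permutation Sorted.
Import ListNotations.
Open Scope R_scope.

Definition pt : Type := (R * R)%type.

Definition dist (p q : pt) : R :=
  sqrt ((fst p - fst q)^2 + (snd p - snd q)^2).

Fixpoint path_len (l : list pt) : R :=
  match l with
  | [] => 0
  | x :: l' =>
      match l' with
      | [] => 0
      | y :: _ => dist x y + path_len l'
      end
  end.

Definition cycle_len (l : list pt) : R :=
  match l with
  | [] => 0
  | x :: _ => path_len (l ++ [x])
  end.

Definition is_min_tsp (V : list pt) (T0 : R) : Prop :=
  (exists p, Permutation V p /\ cycle_len p = T0) /\
  (forall p, Permutation V p -> T0 <= cycle_len p).

(* A tour is the closed polygonal curve O -> t_1 -> ... -> t_m -> O;
   its list t of waypoints may contain arbitrary points; the terminals it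
   visits are the terminals of the instance occurring in t. *)
Definition tour_cost (O : pt) (t : list pt) : R := path_len (O :: t ++ [O]).

Definition sol_cost (O : pt) (S : list (list pt)) : R :=
  fold_right Rplus 0 (map (tour_cost O) S).

Definition is_cvrp_solution (W : list pt) (O : pt) (k : nat)
    (S : list (list pt)) : Prop :=
  (forall t, In t S ->
     exists U : list pt, NoDup U /\ (length U <= k)%nat /\
       (forall p, In p t -> In p W -> In p U)) /\
  (forall v, In v W -> exists t, In t S /\ In v t).

Definition is_approx_solution (alpha : R) (W : list pt) (O : pt) (k : nat)
    (S : list (list pt)) : Prop :=
  is_cvrp_solution W O k S /\
  (forall S', is_cvrp_solution W O k S' -> sol_cost O S <= alpha * sol_cost O S').

(* theta is the polar angle w.r.t. O on the terminals V:
   theta v in [0, 2 pi) and v = O + d(O,v) (cos theta v, sin theta v).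
   (For a terminal equal to O any angle in [0,2pi) is allowed.) *)
Definition is_polar_angle (O : pt) (V : list pt) (theta : pt -> R) : Prop :=
  forall v, In v V ->
    0 <= theta v < 2 * PI /\
    fst v = fst O + dist O v * cos (theta v) /\
    snd v = snd O + dist O v * sin (theta v).

Definition rad_inf (O : pt) (V : list pt) (k : nat) : R :=
  2 / INR k * fold_right Rplus 0 (map (dist O) V).

Definition diam (l : list pt) : R :=
  fold_right Rmax 0 (map (fun p => fold_right Rmax 0 (map (dist p) l)) l).

Definition ceil_div (a b : nat) : nat := ((a + b - 1) / b)%nat.

(* the i-th group (i >= 1) of the sorted list u: entries (i-1)Mk < j <= iMk *)
Definition group (u : list pt) (Mk i : nat) : list pt :=
  firstn Mk (skipn ((i - 1) * Mk) u).

Definition union_cost (O : pt) (S : nat -> list (list pt)) (m : nat) : R :=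
  fold_right Rplus 0 (map (fun i => sol_cost O (S i)) (seq 1 m)).

(* Main.v *)
Require Import Defs.
From Stdlib Require Import Reals List Permutation Sorted.
From Stdlib Require Import Lra Lia.
Import ListNotations.
Open Scope R_scope.
Local Notation dist := Defs.dist.

Lemma dist_sym p q : dist p q = dist q p.
Proof. unfold dist. f_equal. ring. Qed.

Lemma dist_nonneg p q : 0 <= dist p q.
Proof. unfold dist. apply sqrt_pos. Qed.

Lemma dist_refl p : dist p p = 0.
Proof. unfold dist. replace ((fst p - fst p) ^ 2 + (snd p - snd p) ^ 2) with 0 by ring. apply sqrt_0. Qed.

Lemma sqrt_tri (u1 u2 v1 v2 : R) :
  sqrt ((u1 + v1)^2 + (u2 + v2)^2) <= sqrt (u1^2 + u2^2) + sqrt (v1^2 + v2^2).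
Proof.
  set (U := u1^2 + u2^2). set (V := v1^2 + v2^2).
  assert (HU : 0 <= U) by (unfold U; nra).
  assert (HV : 0 <= V) by (unfold V; nra).
  pose proof (sqrt_sqrt U HU) as EU. pose proof (sqrt_sqrt V HV) as EV.
  pose proof (sqrt_pos U). pose proof (sqrt_pos V).
  assert (Hdot : u1 * v1 + u2 * v2 <= sqrt U * sqrt V).
  { destruct (Rle_dec (u1 * v1 + u2 * v2) 0) as [h|h]. nra.
    apply Rsqr_incr_0_var. 2: nra.
    unfold Rsqr. replace (sqrt U * sqrt V * (sqrt U * sqrt V)) with ((sqrt U * sqrt U) * (sqrt V * sqrt V))
      by ring. rewrite EU, EV.
    unfold U, V. pose proof (pow2_ge_0 (u1*v2 - u2*v1)). nra. }
  apply Rsqr_incr_0_var. 2: nra.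
  unfold Rsqr. rewrite sqrt_sqrt by (apply Rplus_le_le_0_compat; apply pow2_ge_0).
  replace ((sqrt U + sqrt V) * (sqrt U + sqrt V)) with ((sqrt U * sqrt U) + (sqrt V * sqrt V) + 2 * (sqrt U * sqrt V))
    by ring. rewrite EU, EV.
  unfold U, V in *. nra.
Qed.

Lemma dist_tri a b c : dist a c <= dist a b + dist b c.
Proof.
  unfold dist.
  replace (fst a - fst c) with ((fst a - fst b) + (fst b - fst c)) by ring.
  replace (snd a - snd c) with ((snd a - snd b) + (snd b - snd c)) by ring.
  apply sqrt_tri.
Qed.

Lemma path_len_cons2 x y l : path_len (x :: y :: l) = dist x y + path_len (y :: l).
Proof. reflexivity. Qed.

Lemma path_len_nonneg l : 0 <= path_len l.
Proof.
  induction l as [|x l IH]; simpl. lra.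
  destruct l. lra. pose proof (dist_nonneg x p). lra.
Qed.

Lemma path_split l1 x l2 :
  path_len (l1 ++ x :: l2) = path_len (l1 ++ [x]) + path_len (x :: l2).
Proof.
  induction l1 as [|a l1 IH]; simpl. lra.
  destruct l1 as [|b l1]; simpl.
  - lra.
  - simpl in IH. rewrite IH. lra.
Qed.

Lemma path_app l1 x y l2 :
  path_len ((l1 ++ [x]) ++ y :: l2) = path_len (l1 ++ [x]) + dist x y + path_len (y :: l2).
Proof.
  rewrite <- app_assoc. cbn [app]. rewrite (path_split l1 x (y :: l2)). rewrite path_len_cons2. lra.
Qed.

Lemma list_last_dec {A} (l : list A) : l = [] \/ exists l' x, l = l' ++ [x].
Proof.
  destruct l as [|a l]. now left. right.
  destruct (exists_last (l:=a::l)) as [l' [x E]]. discriminate. eauto.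
Qed.

Lemma path_len_rev l : path_len (rev l) = path_len l.
Proof.
  induction l as [|a l IH]. reflexivity.
  simpl. destruct l as [|b l]. reflexivity.
  simpl rev. simpl in IH. rewrite <- app_assoc. simpl.
  rewrite path_split. rewrite IH. simpl. rewrite dist_sym. lra.
Qed.


Lemma hd_app {A} (l1 l2 : list A) d : l1 <> [] -> hd d (l1 ++ l2) = hd d l1.
Proof. destruct l1; simpl; congruence. Qed.

Lemma last_app {A} (l1 l2 : list A) d : l2 <> [] -> last (l1 ++ l2) d = last l2 d.
Proof.
  intros H. destruct (list_last_dec l2) as [->|[l' [x ->]]]. congruence.
  rewrite app_assoc, !last_last. reflexivity.
Qed.

Lemma path_app2 l1 l2 d : l1 <> [] -> l2 <> [] ->
  path_len (l1 ++ l2) = path_len l1 + dist (last l1 d) (hd d l2) + path_len l2.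
Proof.
  intros H1 H2. destruct (list_last_dec l1) as [->|[l1' [x ->]]]. congruence.
  destruct l2 as [|y l2]. congruence.
  rewrite path_app, last_last. reflexivity.
Qed.

Lemma cycle_formula l d : l <> [] -> cycle_len l = path_len l + dist (last l d) (hd d l).
Proof.
  intros H. destruct l as [|a l]. congruence.
  unfold cycle_len. rewrite (path_app2 (a :: l) [a] d) by congruence. simpl (hd d _). simpl (path_len [a]). lra.
Qed.

Lemma cycle_len_rot l1 l2 : l1 <> [] -> l2 <> [] ->
  cycle_len (l1 ++ l2) = cycle_len (l2 ++ l1).
Proof.
  intros H1 H2.
  assert (N1 : l1 ++ l2 <> []) by (destruct l1; simpl; congruence).
  assert (N2 : l2 ++ l1 <> []) by (destruct l2; simpl; congruence).
  rewrite (cycle_formula _ (0,0) N1), (cycle_formula _ (0,0) N2).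
  rewrite !path_app2 with (d := (0,0)) by assumption.
  rewrite !hd_app, !last_app by assumption. lra.
Qed.

Lemma cycle_len_nonneg l : 0 <= cycle_len l.
Proof. destruct l; unfold cycle_len. lra. apply path_len_nonneg. Qed.

Definition d0 : pt := (0, 0).
Definition piece := (list pt * R * R)%type.
Definition ppts (p : piece) : list pt := fst (fst p).
Definition pstart (p : piece) : R := snd (fst p).
Definition pend (p : piece) : R := snd p.
Definition plen (p : piece) : R := path_len (ppts p).
Definition sumlen (l : list piece) : R := fold_right Rplus 0 (map plen l).
Definition valid (P : R -> pt) (L1 U : R) (pc : piece) : Prop :=
  ppts pc <> [] /\ hd d0 (ppts pc) = P (pstart pc) /\ last (ppts pc) d0 = P (pend pc) /\
  L1 <= pstart pc <= U /\ L1 <= pend pc <= U.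
Definition revp (pc : piece) : piece := (rev (ppts pc), pend pc, pstart pc).
Definition joinp (a b : piece) : piece := (ppts a ++ ppts b, pstart a, pend b).
Definition minend (pc : piece) : R := Rmin (pstart pc) (pend pc).
Definition orient (pc : piece) : piece :=
  if Rle_dec (pstart pc) (pend pc) then pc else revp pc.

Definition condL2 (ps : list piece) (L2 : R) : Prop :=
  exists pc0 rest, Permutation ps (pc0 :: rest) /\
    (forall pc, In pc rest -> L2 <= pstart pc /\ L2 <= pend pc) /\
    (L2 <= pstart pc0 \/ L2 <= pend pc0).

Lemma sumlen_app l1 l2 : sumlen (l1 ++ l2) = sumlen l1 + sumlen l2.
Proof. unfold sumlen. rewrite map_app, fold_right_app.
  induction l1; simpl. lra. simpl in IHl1. rewrite IHl1. lra. Qed.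

Lemma sumlen_cons a l : sumlen (a :: l) = plen a + sumlen l.
Proof. reflexivity. Qed.

Lemma hd_rev (l : list pt) d : hd d (rev l) = last l d.
Proof.
  destruct (list_last_dec l) as [->|[l' [x ->]]]. reflexivity.
  rewrite rev_app_distr, last_last. reflexivity.
Qed.

Lemma last_rev (l : list pt) d : last (rev l) d = hd d l.
Proof. rewrite <- (rev_involutive l) at 2. rewrite hd_rev. reflexivity. Qed.

Lemma revp_valid P L1 U pc : valid P L1 U pc -> valid P L1 U (revp pc).
Proof.
  unfold valid, revp, ppts, pstart, pend; simpl. intros [H1 [H2 [H3 [H4 H5]]]].
  repeat split; try lra.
  - intro E. apply H1. rewrite <- (rev_involutive (fst (fst pc))), E. reflexivity.
  - rewrite hd_rev. assumption.
  - rewrite last_rev. assumption.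
Qed.

Lemma revp_ne pc : ppts pc <> [] -> ppts (revp pc) <> [].
Proof. unfold revp, ppts; simpl. intros H E. apply H. rewrite <- (rev_involutive (fst (fst pc))), E. reflexivity. Qed.

Lemma revp_plen pc : plen (revp pc) = plen pc.
Proof. unfold plen, revp, ppts. simpl. apply path_len_rev. Qed.

Lemma revp_in pc x : In x (ppts pc) -> In x (ppts (revp pc)).
Proof. unfold revp, ppts. simpl. apply in_rev. Qed.

Lemma orient_props pc :
  pstart (orient pc) = minend pc /\ pend (orient pc) = Rmax (pstart pc) (pend pc) /\
  plen (orient pc) = plen pc /\ (forall x, In x (ppts pc) -> In x (ppts (orient pc))) /\
  (forall P L1 U, valid P L1 U pc -> valid P L1 U (orient pc)).
Proof.
  unfold orient, minend. destruct (Rle_dec (pstart pc) (pend pc)) as [h|h].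
  - rewrite Rmin_left, Rmax_right by lra. refine (conj _ (conj _ (conj _ (conj _ _)))); auto.
  - rewrite Rmin_right, Rmax_left by lra. refine (conj _ (conj _ (conj _ (conj _ _)))); auto using revp_plen, revp_in, revp_valid.
Qed.

Lemma joinp_plen P pa pb : ppts pa <> [] -> ppts pb <> [] ->
  last (ppts pa) d0 = P (pend pa) -> hd d0 (ppts pb) = P (pstart pb) ->
  plen (joinp pa pb) = plen pa + dist (P (pend pa)) (P (pstart pb)) + plen pb.
Proof.
  intros Ha Hb E1 E2. unfold plen, joinp, ppts at 1. simpl.
  rewrite (path_app2 _ _ d0 Ha Hb). rewrite E1, E2. reflexivity.
Qed.

Lemma exists_min {A} (f : A -> R) (l : list A) : l <> [] ->
  exists X a Y, l = X ++ a :: Y /\ forall b, In b l -> f a <= f b.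
Proof.
  induction l as [|x l IH]; intros H. congruence.
  destruct l as [|y l].
  - exists [], x, []. split. reflexivity. intros b [<-|[]]. lra.
  - destruct IH as [X [a [Y [E Hm]]]]. discriminate.
    destruct (Rle_dec (f x) (f a)) as [h|h].
    + exists [], x, (y :: l). split. reflexivity.
      intros b [<-|Hb]. lra. specialize (Hm b Hb). lra.
    + exists (x :: X), a, Y. split. rewrite E. reflexivity.
      intros b [<-|Hb]. lra. auto.
Qed.

Lemma sumlen_perm l l' : Permutation l l' -> sumlen l = sumlen l'.
Proof.
  induction 1; unfold sumlen in *; simpl in *; lra.
Qed.

Lemma joinp_valid P L1 L1' U a b : valid P L1 U a -> valid P L1 U b ->
  L1' <= pstart a -> L1' <= pend b -> valid P L1' U (joinp a b).
Proof.
  unfold valid, joinp, ppts, pstart, pend; simpl.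
  intros [Na [Ha [La [Sa Ea]]]] [Nb [Hb [Lb [Sb Eb]]]] h1 h2.
  repeat split; try lra.
  - intro E. apply app_eq_nil in E. tauto.
  - rewrite hd_app by assumption. assumption.
  - rewrite last_app by assumption. assumption.
Qed.

Lemma valid_lower P L1 L1' U pc : valid P L1 U pc -> L1' <= minend pc -> valid P L1' U pc.
Proof.
  unfold valid, minend. intros [N [H [L [S E]]]] h.
  pose proof (Rmin_l (pstart pc) (pend pc)). pose proof (Rmin_r (pstart pc) (pend pc)).
  repeat split; auto; lra.
Qed.

Lemma minend_le pc : minend pc <= pstart pc /\ minend pc <= pend pc.
Proof. unfold minend. split; [apply Rmin_l|apply Rmin_r]. Qed.

Lemma valid_minend P L1 U pc : valid P L1 U pc -> L1 <= minend pc.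
Proof. unfold valid, minend. intros [_ [_ [_ [S E]]]]. apply Rmin_glb; lra. Qed.

Section Merge.
Variable P : R -> pt.
Hypothesis HP : forall x y, dist (P x) (P y) <= Rabs (x - y).

Lemma merge_aux n : forall ps L1 L2 U, length ps = S n ->
  (forall pc, In pc ps -> valid P L1 U pc) -> condL2 ps L2 ->
  exists w, w <> [] /\ (forall pc x, In pc ps -> In x (ppts pc) -> In x w) /\
    cycle_len w <= sumlen ps + 2 * U - L1 - L2.
Proof.
  induction n as [|n IH]; intros ps L1 L2 U Hlen Hval Hc.
  - destruct ps as [|pc [|]]; try discriminate.
    destruct Hc as [pc0 [rest [Hp [_ Hm]]]].
    apply Permutation_length_1_inv in Hp. injection Hp as -> ->. rename pc into pc0.
    destruct (Hval pc0 (or_introl eq_refl)) as [N [Eh [El [Hs He]]]].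
    exists (ppts pc0). split. assumption. split.
    + intros pc x [<-|[]] Hx. assumption.
    + rewrite (cycle_formula _ d0 N). rewrite El, Eh.
      specialize (HP (pend pc0) (pstart pc0)).
      unfold sumlen. simpl. fold (plen pc0).
      unfold Rabs in HP. destruct (Rcase_abs _) in HP; lra.
  - assert (Hne : ps <> []) by (destruct ps; discriminate).
    destruct (exists_min minend ps Hne) as [X [A [Y [EA HA]]]].
    set (R0 := X ++ Y).
    assert (HR0 : R0 <> []).
    { intro E. unfold R0 in E. apply app_eq_nil in E. destruct E as [-> ->].
      subst ps. simpl in Hlen. discriminate. }
    assert (InR0 : forall pc, In pc R0 -> In pc ps).
    { intros pc H. subst ps. unfold R0 in H. apply in_app_or in H.
      apply in_or_app. destruct H; [left|right; right]; auto. }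
    assert (PermA : Permutation ps (A :: R0)).
    { subst ps. unfold R0. apply Permutation_sym, Permutation_middle. }
    destruct (exists_min minend R0 HR0) as [X2 [B [Y2 [EB HB]]]].
    set (R1 := X2 ++ Y2).
    assert (InR1 : forall pc, In pc R1 -> In pc R0).
    { intros pc H. rewrite EB. unfold R1 in H. apply in_app_or in H.
      apply in_or_app. destruct H; [left|right; right]; auto. }
    assert (PermB : Permutation R0 (B :: R1)).
    { rewrite EB. unfold R1. apply Permutation_sym, Permutation_middle. }
    assert (HlenR1 : length R1 = n).
    { apply Permutation_length in PermA. apply Permutation_length in PermB.
      simpl in *. lia. }
    assert (InA : In A ps) by (subst ps; apply in_or_app; right; left; reflexivity).
    assert (InB : In B R0) by (rewrite EB; apply in_or_app; right; left; reflexivity).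
    assert (Hsum : sumlen ps = plen A + plen B + sumlen R1).
    { rewrite (sumlen_perm _ _ PermA), sumlen_cons, (sumlen_perm _ _ PermB), sumlen_cons. lra. }
    pose proof (orient_props A) as [OA1 [OA2 [OA3 [OA4 OA5]]]].
    pose proof (orient_props B) as [OB1 [OB2 [OB3 [OB4 OB5]]]].
    set (A' := orient A) in *. set (B' := orient B) in *.
    assert (VA : valid P L1 U A') by (apply OA5; apply Hval; assumption).
    assert (VB : valid P L1 U B') by (apply OB5; apply Hval; apply InR0; assumption).
    assert (zw : minend A <= minend B) by (apply HA; apply InR0; assumption).
    assert (a'ge : minend A <= pend A').
    { rewrite OA2. pose proof (minend_le A). pose proof (Rmax_l (pstart A) (pend A)). lra. }
    assert (b'ge : minend B <= pend B').
    { rewrite OB2. pose proof (minend_le B). pose proof (Rmax_l (pstart B) (pend B)). lra. }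
    assert (z1L1 : L1 <= minend A) by (apply (valid_minend P L1 U); apply Hval; assumption).
    destruct Hc as [pc0 [rest [Hp [Hrest Hm]]]].
    assert (HinA : In A (pc0 :: rest)) by (apply (Permutation_in _ Hp); assumption).
    assert (key1 : L2 <= pend A').
    { rewrite OA2. destruct HinA as [E|Hr].
      - subst pc0. pose proof (Rmax_l (pstart A) (pend A)). pose proof (Rmax_r (pstart A) (pend A)). lra.
      - destruct (Hrest A Hr). pose proof (Rmax_l (pstart A) (pend A)). lra. }
    assert (key2 : L2 <= minend B).
    { destruct HinA as [E|Hr].
      - subst pc0. assert (PR : Permutation R0 rest).
        { apply (Permutation_cons_inv (a:=A)). apply (Permutation_trans (Permutation_sym PermA)). exact Hp. }
        destruct (Hrest B (Permutation_in _ PR InB)). unfold minend. apply Rmin_glb; lra.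
      - destruct (Hrest A Hr). assert (L2 <= minend A) by (unfold minend; apply Rmin_glb; lra). lra. }
    assert (VR1 : forall pc, In pc R1 -> valid P (minend B) U pc).
    { intros pc H. apply (valid_lower P L1). apply Hval, InR0, InR1, H. apply HB, InR1, H. }
    assert (R1ge : forall pc, In pc R1 -> minend B <= pstart pc /\ minend B <= pend pc).
    { intros pc H. pose proof (minend_le pc). pose proof (HB pc (InR1 pc H)). lra. }
    assert (Hcov : forall M, (forall x, In x (ppts A) -> In x (ppts M)) ->
                   (forall x, In x (ppts B) -> In x (ppts M)) ->
      forall w0, (forall pc x, In pc (M :: R1) -> In x (ppts pc) -> In x w0) ->
      forall pc x, In pc ps -> In x (ppts pc) -> In x w0).
    { intros M HMA HMB w0 Hw pc x Hpc Hx.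
      apply (Permutation_in _ PermA) in Hpc. destruct Hpc as [<-|Hpc].
      - apply (Hw M). left; reflexivity. auto.
      - apply (Permutation_in _ PermB) in Hpc. destruct Hpc as [<-|Hpc].
        + apply (Hw M). left; reflexivity. auto.
        + apply (Hw pc). right; assumption. assumption. }
    destruct VA as [NA [HhA [HlA _]]]. destruct VB as [NB [HhB [HlB _]]].
    destruct (Rle_dec (pend A') (minend B)) as [c1|c2].
    + set (M := joinp (revp B') (revp A')).
      assert (VM : valid P (minend A) U M).
      { apply joinp_valid with (L1 := L1).
        apply revp_valid, OB5, Hval, InR0, InB.
        apply revp_valid, OA5, Hval, InA.
        unfold revp, pstart; simpl. fold (pend B'). lra.
        unfold revp, pend; simpl. fold (pstart A'). lra. }
      destruct (IH (M :: R1) (minend A) (minend B) U) as [w0 [Nw [Cw Lw]]].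
      * simpl. congruence.
      * intros pc [<-|H]. assumption. apply (valid_lower P (minend B)). auto. pose proof (HB pc (InR1 pc H)); lra.
      * exists M, R1. split. apply Permutation_refl. split. assumption.
        left. unfold M, joinp, revp, pstart; simpl. fold (pend B'). lra.
      * exists w0. split. assumption. split.
        -- apply (Hcov M); auto.
           ++ intros x Hx. unfold M, joinp, ppts at 1; simpl. apply in_or_app. right.
              apply revp_in. auto.
           ++ intros x Hx. unfold M, joinp, ppts at 1; simpl. apply in_or_app. left.
              apply revp_in. auto.
        -- rewrite sumlen_cons in Lw.
           assert (PM : plen M = plen B' + dist (P (minend B)) (P (pend A')) + plen A').
           { unfold M. rewrite (joinp_plen P).
             - rewrite !revp_plen. unfold revp, pend at 1, pstart at 2; simpl.
               fold (pstart B'). fold (pend A'). rewrite OB1. lra.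
             - apply revp_ne; assumption.
             - apply revp_ne; assumption.
             - unfold revp, ppts, pend; simpl. rewrite last_rev. fold (ppts B'). rewrite HhB. reflexivity.
             - unfold revp, ppts, pstart; simpl. rewrite hd_rev. fold (ppts A'). rewrite HlA. reflexivity. }
           pose proof (HP (minend B) (pend A')) as Hd.
           rewrite Rabs_pos_eq in Hd by lra.
           rewrite Hsum. rewrite OA3, OB3 in PM. lra.
    + set (M := joinp (revp A') B').
      assert (VM : valid P (minend B) U M).
      { apply joinp_valid with (L1 := L1).
        apply revp_valid, OA5, Hval, InA.
        apply OB5, Hval, InR0, InB.
        unfold revp, pstart; simpl. fold (pend A'). lra.
        lra. }
      destruct (IH (M :: R1) (minend B) (minend B) U) as [w0 [Nw [Cw Lw]]].
      * simpl. congruence.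
      * intros pc [<-|H]. assumption. auto.
      * exists M, R1. split. apply Permutation_refl. split. assumption.
        left. unfold M, joinp, revp, pstart; simpl. fold (pend A'). lra.
      * exists w0. split. assumption. split.
        -- apply (Hcov M); auto.
           ++ intros x Hx. unfold M, joinp, ppts at 1; simpl. apply in_or_app. left.
              apply revp_in. auto.
           ++ intros x Hx. unfold M, joinp, ppts at 1; simpl. apply in_or_app. right. auto.
        -- rewrite sumlen_cons in Lw.
           assert (PM : plen M = plen A' + dist (P (minend A)) (P (minend B)) + plen B').
           { unfold M. rewrite (joinp_plen P).
             - rewrite !revp_plen. unfold revp, pend at 1; simpl.
               fold (pstart A'). rewrite OA1, OB1. lra.
             - apply revp_ne; assumption.
             - assumption.
             - unfold revp, ppts, pend; simpl. rewrite last_rev. fold (ppts A'). rewrite HhA. reflexivity.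
             - assumption. }
           pose proof (HP (minend A) (minend B)) as Hd.
           rewrite Rabs_minus_sym, Rabs_pos_eq in Hd by lra.
           rewrite Hsum. rewrite OA3, OB3 in PM. lra.
Qed.
End Merge.

Definition sumR (l : list R) : R := fold_right Rplus 0 l.

Lemma sumR_perm l l' : Permutation l l' -> sumR l = sumR l'.
Proof. induction 1; unfold sumR in *; simpl in *; lra. Qed.

Lemma sumR_app l1 l2 : sumR (l1 ++ l2) = sumR l1 + sumR l2.
Proof. induction l1; unfold sumR in *; simpl in *; lra. Qed.

Lemma sumR_map_cons {A} (f : A -> R) a L : sumR (map f (a :: L)) = f a + sumR (map f L).
Proof. reflexivity. Qed.

Lemma sumR_map_le {A} (f g : A -> R) l : (forall x, In x l -> f x <= g x) ->
  sumR (map f l) <= sumR (map g l).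
Proof.
  induction l as [|a l IH]; intros H; unfold sumR in *; simpl. lra.
  pose proof (H a (or_introl eq_refl)). assert (fold_right Rplus 0 (map f l) <= fold_right Rplus 0 (map g l)) by (apply IH; intros; apply H; right; auto). lra.
Qed.

Lemma sumR_map_plus {A} (f g : A -> R) l : sumR (map (fun x => f x + g x) l) = sumR (map f l) + sumR (map g l).
Proof. induction l; unfold sumR in *; simpl in *; lra. Qed.

Lemma sumR_map_scal {A} (f : A -> R) a l : sumR (map (fun x => a * f x) l) = a * sumR (map f l).
Proof. induction l; unfold sumR in *; simpl in *; nra. Qed.

Lemma sumR_map_const {A} (a : R) (l : list A) : sumR (map (fun _ => a) l) = INR (length l) * a.
Proof. induction l; unfold sumR in *; simpl in *. lra. rewrite IHl. destruct (length l); simpl; lra. Qed.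

Lemma sumR_nonneg {A} (f : A -> R) l : (forall x, In x l -> 0 <= f x) -> 0 <= sumR (map f l).
Proof.
  intros H. apply Rle_trans with (sumR (map (fun _ => 0) l)).
  rewrite sumR_map_const. lra. apply sumR_map_le. auto.
Qed.

Section ITP.
Variable O : pt.
Variable k : nat.
Hypothesis Hk : (1 <= k)%nat.

Fixpoint Bc (c : nat) (l : list pt) : R :=
  match l with
  | [] => 0
  | x :: l' => match l' with
              | [] => 0
              | _ => if Nat.eqb c 1 then dist O x + Bc k l' else Bc (c - 1) l'
              end
  end.

Fixpoint Dl (l : list pt) : R :=
  match l with
  | [] => 0
  | x :: l' => match l' with [] => 0 | _ => dist O x + Dl l' end
  end.

Lemma Dl_le l : Dl l <= sumR (map (dist O) l).
Proof.
  induction l as [|x l IH]; unfold sumR in *; simpl. lra.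
  pose proof (dist_nonneg O x). destruct l. simpl. lra. lra.
Qed.

Lemma Bc_sum l : sumR (map (fun c => Bc c l) (seq 1 k)) = Dl l.
Proof.
  induction l as [|x l IH].
  - simpl. induction (seq 1 k); unfold sumR in *; simpl in *; lra.
  - destruct l as [|y l].
    + simpl. induction (seq 1 k); unfold sumR in *; simpl in *; lra.
    + change (Dl (x :: y :: l)) with (dist O x + Dl (y :: l)). rewrite <- IH.
      replace (seq 1 k) with (1%nat :: seq 2 (k - 1)) at 1 by (destruct k; [lia|simpl; rewrite Nat.sub_0_r; reflexivity]).
      rewrite sumR_map_cons.
      replace (Bc 1 (x :: y :: l)) with (dist O x + Bc k (y :: l)) by reflexivity.
      rewrite <- seq_shift, map_map.
      replace (map (fun c => Bc (S c) (x :: y :: l)) (seq 1 (k - 1))) with (map (fun c => Bc c (y :: l)) (seq 1 (k - 1))).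
      2: { apply map_ext_in. intros c Hc. apply in_seq in Hc.
           destruct c as [|[|c]]; [lia|reflexivity|reflexivity]. }
      replace (seq 1 k) with (seq 1 (k - 1) ++ [k]) by
        (replace k with (S (k - 1)) at 3 by lia; rewrite seq_S; f_equal; f_equal; lia).
      rewrite map_app, sumR_app. simpl map. unfold sumR at 3. simpl. lra.
Qed.

Lemma exists_avg {A} (f : A -> R) (L : list A) X : L <> [] -> sumR (map f L) <= X ->
  exists a, In a L /\ f a <= X / INR (length L).
Proof.
  intros HL HS. destruct (exists_min f L HL) as [P [a [Q [E Hm]]]].
  exists a. split. rewrite E. apply in_or_app. right. left. reflexivity.
  assert (Hlen : (0 < length L)%nat) by (destruct L; [congruence|simpl; lia]).
  apply lt_0_INR in Hlen.
  assert (INR (length L) * f a <= sumR (map f L)).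
  { rewrite <- sumR_map_const. apply sumR_map_le. auto. }
  apply Rmult_le_reg_l with (INR (length L)). assumption.
  field_simplify. lra. lra.
Qed.

Definition prep (acc : list pt) (cs : list (list pt)) : list (list pt) :=
  match cs with [] => [acc] | h :: t => (acc ++ h) :: t end.

Fixpoint chunks (c : nat) (l : list pt) : list (list pt) :=
  match l with
  | [] => [[]]
  | x :: l' => if Nat.eqb c 1 then [x] :: chunks k l' else prep [x] (chunks (c - 1) l')
  end.

Definition tour (t : list pt) := tour_cost O t.
Definition scost (S : list (list pt)) := sumR (map tour S).

Lemma tour_nil : tour [] = 0.
Proof. unfold tour, tour_cost. simpl. rewrite dist_refl. lra. Qed.

Lemma prep_assoc acc x cs : prep acc (prep [x] cs) = prep (acc ++ [x]) cs.
Proof. destruct cs; simpl; rewrite <- ?app_assoc; reflexivity. Qed.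

Lemma scost_prep_nil cs : scost (prep [] cs) = scost cs.
Proof. destruct cs; unfold scost, sumR; simpl. rewrite tour_nil. lra. reflexivity. Qed.

Lemma tour_split l1 x y l2 :
  tour (l1 ++ [x]) + tour (y :: l2) <= tour (l1 ++ x :: y :: l2) + 2 * dist O x.
Proof.
  unfold tour, tour_cost.
  replace (O :: (l1 ++ x :: y :: l2) ++ [O]) with ((O :: l1) ++ x :: y :: l2 ++ [O])
    by (simpl; rewrite <- app_assoc; reflexivity).
  replace (O :: (l1 ++ [x]) ++ [O]) with ((O :: l1) ++ x :: [O])
    by (simpl; rewrite <- app_assoc; reflexivity).
  rewrite (path_split (O :: l1) x [O]), (path_split (O :: l1) x (y :: l2 ++ [O])).
  rewrite (path_len_cons2 x O []), (path_len_cons2 x y).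
  replace (O :: (y :: l2) ++ [O]) with (O :: y :: l2 ++ [O]) by reflexivity.
  rewrite (path_len_cons2 O y). simpl (path_len [O]).
  pose proof (dist_tri O x y). rewrite (dist_sym x O). lra.
Qed.

Lemma chunks_cost l : forall c acc, (1 <= c)%nat ->
  scost (prep acc (chunks c l)) <= tour (acc ++ l) + 2 * Bc c l.
Proof.
  induction l as [|x l IH]; intros c acc Hc.
  - simpl. unfold scost, sumR. simpl. lra.
  - simpl chunks. destruct (Nat.eqb_spec c 1) as [->|Hc1].
    + simpl prep. unfold scost. cbn [map]. unfold sumR. cbn [fold_right]. fold (sumR (map tour (chunks k l))).
      fold (scost (chunks k l)).
      pose proof (IH k [] Hk) as H. rewrite scost_prep_nil in H. simpl app in H.
      destruct l as [|y l].
      * simpl in *. unfold scost, sumR in *; simpl in *. rewrite tour_nil. lra.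
      * replace (Bc 1 (x :: y :: l)) with (dist O x + Bc k (y :: l)) by reflexivity.
        pose proof (tour_split acc x y l). lra.
    + rewrite prep_assoc. specialize (IH (c - 1)%nat (acc ++ [x]) ltac:(lia)).
      rewrite <- app_assoc in IH. simpl app in IH.
      replace (Bc c (x :: l)) with (Bc (c - 1) l). assumption.
      simpl. destruct l. reflexivity. apply Nat.eqb_neq in Hc1. rewrite Hc1. reflexivity.
Qed.

Lemma chunks_ne c l : chunks c l <> [].
Proof. destruct l; simpl. congruence. destruct (Nat.eqb c 1). congruence. destruct (chunks (c-1) l); simpl; congruence. Qed.

Lemma concat_prep acc cs : concat (prep acc cs) = acc ++ concat cs.
Proof. destruct cs; simpl. rewrite !app_nil_r. reflexivity. rewrite app_assoc. reflexivity. Qed.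

Lemma chunks_concat l : forall c, concat (chunks c l) = l.
Proof.
  induction l as [|x l IH]; intros c; simpl. reflexivity.
  destruct (Nat.eqb c 1); simpl. rewrite IH. reflexivity. rewrite concat_prep, IH. reflexivity.
Qed.

Definition chunks_ok (c : nat) (cs : list (list pt)) : Prop :=
  match cs with [] => True | h :: t => (length h <= c)%nat /\ forall ch, In ch t -> (length ch <= k)%nat end.

Lemma chunks_size l : forall c, (1 <= c <= k)%nat -> chunks_ok c (chunks c l).
Proof.
  induction l as [|x l IH]; intros c Hc; simpl.
  - split. simpl; lia. intros _ [].
  - destruct (Nat.eqb_spec c 1) as [->|Hc1].
    + simpl. split. lia. intros ch Hch. specialize (IH k ltac:(lia)).
      destruct (chunks k l) as [|h t]. destruct Hch. destruct IH as [I1 I2].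
      destruct Hch as [<-|Hch]; auto.
    + specialize (IH (c - 1)%nat ltac:(lia)). destruct (chunks (c - 1) l) as [|h t]; simpl.
      split. simpl. lia. intros _ [].
      destruct IH as [I1 I2]. split. simpl. lia. auto.
Qed.

Lemma chunks_size_all c l : (1 <= c <= k)%nat -> forall ch, In ch (chunks c l) -> (length ch <= k)%nat.
Proof.
  intros Hc ch Hch. pose proof (chunks_size l c Hc). destruct (chunks c l) as [|h t]. destruct Hch.
  destruct H as [H1 H2]. destruct Hch as [<-|Hch]. lia. auto.
Qed.

Lemma nodup_in_concat (cs : list (list pt)) ch : In ch cs -> NoDup (concat cs) -> NoDup ch.
Proof.
  induction cs as [|h t IH]; simpl. intros []. intros [<-|H] N.
  eapply NoDup_app_remove_r; eauto. apply IH; auto. eapply NoDup_app_remove_l; eauto.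
Qed.

Lemma TP (W c : list pt) : NoDup W -> Permutation W c ->
  exists S', is_cvrp_solution W O k S' /\
    sol_cost O S' <= tour_cost O c + 2 / INR k * sumR (map (dist O) W).
Proof.
  intros HW Hp.
  assert (Hkne : seq 1 k <> []) by (destruct k; [lia|simpl; congruence]).
  destruct (exists_avg (fun c0 => Bc c0 c) (seq 1 k) (Dl c) Hkne) as [c0 [Hc0 Hb]].
  { rewrite Bc_sum. lra. }
  rewrite length_seq in Hb. apply in_seq in Hc0.
  exists (chunks c0 c). split. split.
  - intros t Ht. exists t. split.
    + apply (nodup_in_concat (chunks c0 c)). assumption. rewrite chunks_concat.
      apply (Permutation_NoDup Hp HW).
    + split. apply (chunks_size_all c0 c). lia. assumption. auto.
  - intros v Hv. apply (Permutation_in _ Hp) in Hv. rewrite <- (chunks_concat c c0) in Hv.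
    apply in_concat in Hv. destruct Hv as [t [Ht Hvt]]. eauto.
  - pose proof (chunks_cost c c0 [] ltac:(lia)) as H. rewrite scost_prep_nil in H.
    unfold scost, tour in H. simpl app in H.
    unfold sol_cost. fold (sumR (map (tour_cost O) (chunks c0 c))).
    pose proof (Dl_le c). rewrite <- (sumR_perm _ _ (Permutation_map (dist O) Hp)) in H0.
    assert (0 < INR k) by (apply lt_0_INR; lia).
    assert (Bc c0 c <= sumR (map (dist O) W) / INR k).
    { apply Rle_trans with (Dl c / INR k). assumption. unfold Rdiv. apply Rmult_le_compat_r.
      left. apply Rinv_0_lt_compat. assumption. assumption. }
    assert (E : 2 / INR k * sumR (map (dist O) W) = 2 * (sumR (map (dist O) W) / INR k)) by (field; lra).
    rewrite E. change (map (fun t : list pt => tour_cost O t)) with (map (tour_cost O)) in H. lra.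
Qed.

End ITP.

Definition pt_eq_dec (x y : pt) : {x = y} + {x <> y}.
Proof.
  destruct x as [x1 x2], y as [y1 y2].
  destruct (Req_dec_T x1 y1) as [e1|n1]; [destruct (Req_dec_T x2 y2) as [e2|n2]|].
  - left. subst. reflexivity.
  - right. intro E. injection E. auto.
  - right. intro E. injection E. auto.
Defined.

Inductive subseq : list pt -> list pt -> Prop :=
| ss_nil : subseq [] []
| ss_keep x l1 l2 : subseq l1 l2 -> subseq (x :: l1) (x :: l2)
| ss_drop x l1 l2 : subseq l1 l2 -> subseq l1 (x :: l2).

Lemma path_detour a x r : r <> [] -> path_len (a :: r) <= dist a x + path_len (x :: r).
Proof.
  destruct r as [|h r]. congruence. intros _.
  rewrite !path_len_cons2. pose proof (dist_tri a x h). lra.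
Qed.

Lemma subseq_path l1 l2 : subseq l1 l2 -> forall a b,
  path_len (a :: l1 ++ [b]) <= path_len (a :: l2 ++ [b]).
Proof.
  induction 1; intros a b.
  - lra.
  - simpl app. rewrite !path_len_cons2. specialize (IHsubseq x b). lra.
  - simpl (a :: (x :: l2) ++ [b]). rewrite path_len_cons2.
    specialize (IHsubseq x b).
    assert (l1 ++ [b] <> []) by (destruct l1; simpl; congruence).
    pose proof (path_detour a x (l1 ++ [b]) H0). lra.
Qed.

Lemma shortcut_exists (W w : list pt) : exists c, subseq c w /\ NoDup c /\
  forall x, In x c <-> (In x w /\ In x W).
Proof.
  induction w as [|x w IH].
  - exists []. split. constructor. split. constructor. simpl. tauto.
  - destruct IH as [c [S [N H]]].
    destruct (in_dec pt_eq_dec x W) as [xW|xW]; [destruct (in_dec pt_eq_dec x c) as [xc|xc]|].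
    + exists c. split. constructor; auto. split. auto. intros y. rewrite H. simpl.
      split. tauto. intros [[<-|Hy] Hw]. rewrite <- H. auto. auto.
    + exists (x :: c). split. constructor; auto. split. constructor; auto.
      intros y. simpl. rewrite H. split. intros [<-|Hy]; tauto. intros [[<-|Hy] Hw]; tauto.
    + exists c. split. constructor; auto. split. auto. intros y. rewrite H. simpl.
      split. tauto. intros [[<-|Hy] Hw]. contradiction. auto.
Qed.

Lemma shortcut (O : pt) (W w : list pt) : NoDup W -> (forall x, In x W -> In x w) ->
  exists c, Permutation W c /\ tour_cost O c <= tour_cost O w.
Proof.
  intros HW Hin. destruct (shortcut_exists W w) as [c [S [N H]]].
  exists c. split.
  - apply NoDup_Permutation; auto. intros x. rewrite H. split; [intro; split; auto|tauto].
  - unfold tour_cost. apply subseq_path. assumption.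
Qed.

Definition ray (O : pt) (phi rho : R) : pt := (fst O + rho * cos phi, snd O + rho * sin phi).
Definition star (O : pt) (g1 g2 t : R) : pt :=
  if Rlt_dec t 0 then ray O g1 (- t) else ray O g2 t.

Lemma ray0 O phi : ray O phi 0 = O.
Proof. unfold ray. destruct O; simpl. f_equal; ring. Qed.

Lemma dist_ray_same O phi r r' : dist (ray O phi r) (ray O phi r') = Rabs (r - r').
Proof.
  unfold dist, ray; cbn [fst snd].
  replace ((fst O + r * cos phi - (fst O + r' * cos phi)) ^ 2 + (snd O + r * sin phi - (snd O + r' * sin phi)) ^ 2)
    with ((r - r')² * ((sin phi)² + (cos phi)²)) by (unfold Rsqr; ring).
  rewrite sin2_cos2, Rmult_1_r. apply sqrt_Rsqr_abs.
Qed.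

Lemma dist_O_ray O phi r : 0 <= r -> dist O (ray O phi r) = r.
Proof.
  intros h. rewrite <- (ray0 O phi) at 1. rewrite dist_ray_same.
  rewrite Rabs_minus_sym, Rminus_0_r. apply Rabs_pos_eq. assumption.
Qed.

Lemma star_pos O g1 g2 r : 0 <= r -> star O g1 g2 r = ray O g2 r.
Proof. intros h. unfold star. destruct (Rlt_dec r 0). lra. reflexivity. Qed.

Lemma star_neg O g1 g2 r : 0 <= r -> star O g1 g2 (- r) = ray O g1 r.
Proof.
  intros h. unfold star. destruct (Rlt_dec (- r) 0). rewrite Ropp_involutive. reflexivity.
  assert (r = 0) by lra. subst. rewrite Ropp_0, !ray0. reflexivity.
Qed.

Lemma star0 O g1 g2 : star O g1 g2 0 = O.
Proof. rewrite star_pos by lra. apply ray0. Qed.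

Lemma star_dist O g1 g2 x y : dist (star O g1 g2 x) (star O g1 g2 y) <= Rabs (x - y).
Proof.
  unfold star. destruct (Rlt_dec x 0) as [hx|hx]; destruct (Rlt_dec y 0) as [hy|hy].
  - rewrite dist_ray_same. replace (- x - - y) with (- (x - y)) by ring. rewrite Rabs_Ropp. lra.
  - pose proof (dist_tri (ray O g1 (- x)) O (ray O g2 y)).
    rewrite (dist_sym (ray O g1 (- x)) O), (dist_O_ray O g1 (- x)) in H by lra. rewrite (dist_O_ray O g2 y) in H by lra.
    rewrite Rabs_left by lra. lra.
  - pose proof (dist_tri (ray O g2 x) O (ray O g1 (- y))).
    rewrite (dist_sym (ray O g2 x) O), (dist_O_ray O g2 x) in H by lra. rewrite (dist_O_ray O g1 (- y)) in H by lra.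
    rewrite Rabs_right by lra. lra.
  - rewrite dist_ray_same. lra.
Qed.

Lemma div_nonneg a b : 0 <= a -> 0 < b -> 0 <= a / b.
Proof. intros. unfold Rdiv. apply Rmult_le_pos. auto. left. apply Rinv_0_lt_compat. auto. Qed.

Definition lerp (a b : pt) (s : R) : pt := (fst a + s * (fst b - fst a), snd a + s * (snd b - snd a)).

Lemma dist_lerp_l a b s : 0 <= s -> dist a (lerp a b s) = s * dist a b.
Proof.
  intros h. unfold dist, lerp; cbn [fst snd].
  replace ((fst a - (fst a + s * (fst b - fst a))) ^ 2 + (snd a - (snd a + s * (snd b - snd a))) ^ 2)
    with ((s * s) * ((fst a - fst b) ^ 2 + (snd a - snd b) ^ 2)) by ring.
  rewrite sqrt_mult_alt by nra. rewrite sqrt_square by lra. reflexivity.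
Qed.

Lemma dist_lerp_r a b s : s <= 1 -> dist (lerp a b s) b = (1 - s) * dist a b.
Proof.
  intros h. unfold dist, lerp; cbn [fst snd].
  replace ((fst a + s * (fst b - fst a) - fst b) ^ 2 + (snd a + s * (snd b - snd a) - snd b) ^ 2)
    with (((1 - s) * (1 - s)) * ((fst a - fst b) ^ 2 + (snd a - snd b) ^ 2)) by ring.
  rewrite sqrt_mult_alt by nra. rewrite sqrt_square by lra. reflexivity.
Qed.

Section Core.
Variables (O : pt) (ra rb al be : R).
Hypothesis (Hra : 0 < ra) (Hrb : 0 < rb) (Hab : 0 < be - al < PI).

Definition cA (phi : R) := ra * sin (phi - al).
Definition cB (phi : R) := rb * sin (be - phi).

Lemma cS_pos phi : al <= phi <= be -> 0 < cA phi + cB phi.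
Proof.
  intros [h1 h2]. unfold cA, cB.
  assert (0 <= sin (be - phi)) by (apply sin_ge_0; lra).
  destruct (Req_dec phi al) as [->|ne].
  - replace (al - al) with 0 by ring. rewrite sin_0.
    assert (0 < sin (be - al)) by (apply sin_gt_0; lra). nra.
  - assert (0 < sin (phi - al)) by (apply sin_gt_0; lra). nra.
Qed.

Definition sp (phi : R) := cA phi / (cA phi + cB phi).
Definition rp (phi : R) := ra * rb * sin (be - al) / (cA phi + cB phi).

Lemma on_seg phi : al <= phi <= be ->
  ray O phi (rp phi) = lerp (ray O al ra) (ray O be rb) (sp phi) /\
  0 <= sp phi <= 1 /\ 0 <= rp phi <= Rmax ra rb.
Proof.
  intros Hphi. pose proof (cS_pos phi Hphi) as HS.
  assert (HA : 0 <= cA phi) by (unfold cA; assert (0 <= sin (phi - al)) by (apply sin_ge_0; lra); nra).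
  assert (HB : 0 <= cB phi) by (unfold cB; assert (0 <= sin (be - phi)) by (apply sin_ge_0; lra); nra).
  assert (Hsab : 0 < sin (be - al)) by (apply sin_gt_0; lra).
  split; [|split].
  - unfold ray, lerp, rp, sp, cA, cB; simpl.
    rewrite !sin_minus in *. f_equal; field; unfold cA, cB in HS; rewrite !sin_minus in HS; lra.
  - unfold sp. split.
    + apply div_nonneg; lra.
    + apply Rmult_le_reg_r with (cA phi + cB phi). lra. unfold Rdiv. rewrite Rmult_assoc, Rinv_l by lra. lra.
  - unfold rp. split.
    + apply div_nonneg. apply Rmult_le_pos. nra. lra. lra.
    + apply Rmult_le_reg_r with (cA phi + cB phi). lra. unfold Rdiv. rewrite Rmult_assoc, Rinv_l by lra.
      rewrite Rmult_1_r.
      assert (Hsub : sin (be - al) <= sin (phi - al) + sin (be - phi)).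
      { replace (be - al) with ((phi - al) + (be - phi)) by ring. rewrite sin_plus.
        assert (0 <= sin (phi - al)) by (apply sin_ge_0; lra).
        assert (0 <= sin (be - phi)) by (apply sin_ge_0; lra).
        pose proof (COS_bound (be - phi)). pose proof (COS_bound (phi - al)). nra. }
      pose proof (Rmax_l ra rb). pose proof (Rmax_r ra rb).
      unfold cA, cB.
      assert (0 <= sin (phi - al)) by (apply sin_ge_0; lra).
      assert (0 <= sin (be - phi)) by (apply sin_ge_0; lra).
      assert (ra * rb * sin (be - al) <= ra * rb * (sin (phi - al) + sin (be - phi))).
      { apply Rmult_le_compat_l. nra. assumption. }
      assert (rb * (ra * sin (phi - al)) <= Rmax ra rb * (ra * sin (phi - al))).
      { apply Rmult_le_compat_r. nra. assumption. }
      assert (ra * (rb * sin (be - phi)) <= Rmax ra rb * (rb * sin (be - phi))).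
      { apply Rmult_le_compat_r. nra. assumption. }
      nra.
Qed.

Lemma sp_mono p1 p2 : al <= p1 -> p1 <= p2 -> p2 <= be -> sp p1 <= sp p2.
Proof.
  intros h1 h2 h3. pose proof (cS_pos p1 (conj h1 (Rle_trans _ _ _ h2 h3))) as S1.
  pose proof (cS_pos p2 (conj (Rle_trans _ _ _ h1 h2) h3)) as S2.
  unfold sp. apply Rmult_le_reg_r with ((cA p1 + cB p1) * (cA p2 + cB p2)). nra.
  replace (cA p1 / (cA p1 + cB p1) * ((cA p1 + cB p1) * (cA p2 + cB p2))) with (cA p1 * (cA p2 + cB p2)) by (field; lra).
  replace (cA p2 / (cA p2 + cB p2) * ((cA p1 + cB p1) * (cA p2 + cB p2))) with (cA p2 * (cA p1 + cB p1)) by (field; lra).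
  assert (E : cA p2 * cB p1 - cA p1 * cB p2 = ra * rb * sin (be - al) * sin (p2 - p1)).
  { unfold cA, cB. rewrite !sin_minus. ring. }
  assert (0 < sin (be - al)) by (apply sin_gt_0; lra).
  assert (0 <= sin (p2 - p1)) by (apply sin_ge_0; lra).
  assert (0 <= ra * rb * sin (be - al) * sin (p2 - p1)).
  { apply Rmult_le_pos; [|lra]. apply Rmult_le_pos; [nra|lra]. }
  nra.
Qed.

Lemma core p1 p2 : al <= p1 -> p1 <= p2 -> p2 <= be ->
  exists r1 r2, 0 <= r1 <= Rmax ra rb /\ 0 <= r2 <= Rmax ra rb /\
   dist (ray O al ra) (ray O p1 r1) + dist (ray O p2 r2) (ray O be rb) <= dist (ray O al ra) (ray O be rb).
Proof.
  intros h1 h2 h3.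
  destruct (on_seg p1 (conj h1 (Rle_trans _ _ _ h2 h3))) as [E1 [s1 r1]].
  destruct (on_seg p2 (conj (Rle_trans _ _ _ h1 h2) h3)) as [E2 [s2 r2]].
  exists (rp p1), (rp p2). split. assumption. split. assumption.
  rewrite E1, E2, dist_lerp_l, dist_lerp_r by lra.
  pose proof (sp_mono p1 p2 h1 h2 h3). pose proof (dist_nonneg (ray O al ra) (ray O be rb)). nra.
Qed.
End Core.

Lemma ray_2pi O phi rho : ray O (phi - 2 * PI) rho = ray O phi rho.
Proof. unfold ray. rewrite cos_minus, sin_minus, cos_2PI, sin_2PI. f_equal; ring. Qed.

Lemma dist_opposite O th ra rb : 0 <= ra -> 0 <= rb ->
  dist (ray O th ra) (ray O (th + PI) rb) = ra + rb.
Proof.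
  intros h1 h2. unfold dist, ray; cbn [fst snd]. rewrite neg_cos, neg_sin.
  replace ((fst O + ra * cos th - (fst O + rb * - cos th)) ^ 2 + (snd O + ra * sin th - (snd O + rb * - sin th)) ^ 2)
    with ((ra + rb)² * ((sin th)² + (cos th)²)) by (unfold Rsqr; ring).
  rewrite sin2_cos2, Rmult_1_r. rewrite sqrt_Rsqr by lra. reflexivity.
Qed.

Lemma crossing O ra rb tha thb g1 g2 d1 d2 R :
  0 <= ra <= R -> 0 <= rb <= R -> 0 <= g1 -> g1 <= tha -> tha <= g2 -> g2 <= d1 ->
  d1 <= thb -> thb <= d2 -> d2 <= 2 * PI -> thb < 2 * PI ->
  exists ta tb, -R <= ta <= R /\ -R <= tb <= R /\
    dist (ray O tha ra) (star O g1 g2 ta) + dist (star O d1 d2 tb) (ray O thb rb)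
      <= dist (ray O tha ra) (ray O thb rb).
Proof.
  intros Ha Hb h1 h2 h3 h4 h5 h6 h7 h8.
  destruct (Req_dec ra 0) as [E|Ea].
  { exists 0, 0. rewrite !star0. subst ra. rewrite ray0, dist_refl. lra. }
  destruct (Req_dec rb 0) as [E|Eb].
  { exists 0, 0. rewrite !star0. subst rb. rewrite ray0, dist_refl. lra. }
  assert (MR : Rmax ra rb <= R) by (apply Rmax_lub; lra).
  assert (MR' : Rmax rb ra <= R) by (apply Rmax_lub; lra).
  destruct (Req_dec tha thb) as [Eq|Ne].
  { exists ra, (- rb). rewrite star_pos, star_neg by lra.
    assert (g2 = tha) by lra. assert (d1 = thb) by lra. subst g2 d1.
    rewrite !dist_refl. pose proof (dist_nonneg (ray O tha ra) (ray O thb rb)). repeat split; lra. }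
  destruct (Rlt_dec (thb - tha) PI) as [c1|c1].
  { destruct (core O ra rb tha thb ltac:(lra) ltac:(lra) ltac:(lra) g2 d1) as [r1 [r2 [Hr1 [Hr2 Hd]]]]; try lra.
    exists r1, (- r2). rewrite star_pos, star_neg by lra. repeat split; lra. }
  destruct (Req_dec (thb - tha) PI) as [c2|c2].
  { exists 0, 0. rewrite !star0. replace thb with (tha + PI) by lra.
    rewrite dist_opposite by lra. rewrite dist_sym, !dist_O_ray by lra. repeat split; lra. }
  destruct (core O rb ra (thb - 2 * PI) tha ltac:(lra) ltac:(lra) ltac:(lra) (d2 - 2 * PI) g1)
    as [r1 [r2 [Hr1 [Hr2 Hd]]]]; try lra.
  rewrite !ray_2pi in Hd.
  exists (- r2), r1. rewrite star_neg, star_pos by lra.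
  rewrite (dist_sym (ray O thb rb)) in Hd. rewrite (dist_sym (ray O thb rb)) in Hd.
  repeat split; try lra.
  rewrite (dist_sym (ray O tha ra) (ray O g1 r2)). lra.
Qed.

Section Build.
Variable V : list pt.
Variable g : pt -> nat.
Variable starf : nat -> R -> pt.
Variable D : R.
Hypothesis Hcross : forall v w, In v V -> In w V -> g v <> g w ->
  exists tv tw, -D <= tv <= D /\ -D <= tw <= D /\
    dist v (starf (g v) tv) + dist (starf (g w) tw) w <= dist v w.

Lemma build l' : forall v1 acc ts te, (forall x, In x (v1 :: l') -> In x V) ->
  acc <> [] -> hd d0 acc = starf (g v1) ts -> -D <= ts <= D -> -D <= te <= D ->
  exists PS : list (piece * nat),
    (forall pc i, In (pc, i) PS -> valid (starf i) (-D) D pc) /\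
    (forall pc i, In (pc, i) PS -> exists x, In x (v1 :: l') /\ g x = i) /\
    (forall x, In x (v1 :: l') -> exists pc, In (pc, g x) PS /\ In x (ppts pc)) /\
    (exists pc, In (pc, g v1) PS /\ forall x, In x acc -> In x (ppts pc)) /\
    sumlen (map fst PS) <= path_len (acc ++ v1 :: l') +
       dist (last (v1 :: l') d0) (starf (g (last (v1 :: l') d0)) te).
Proof.
  induction l' as [|w l'' IH]; intros v1 acc ts te HV Hacc Hhd Hts Hte.
  - set (pc := (acc ++ [v1; starf (g v1) te], ts, te)).
    exists [(pc, g v1)].
    split; [|split; [|split; [|split]]].
    + intros pc' i [E|[]]. injection E as <- <-. unfold valid, pc, ppts, pstart, pend; simpl.
      repeat split; try lra.
      * intro E. apply app_eq_nil in E. tauto.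
      * rewrite hd_app by assumption. assumption.
      * replace (acc ++ [v1; starf (g v1) te]) with ((acc ++ [v1]) ++ [starf (g v1) te]) by (rewrite <- app_assoc; reflexivity).
        apply last_last.
    + intros pc' i [E|[]]. injection E as <- <-. exists v1. split. left; reflexivity. reflexivity.
    + intros x [<-|[]]. exists pc. split. left; reflexivity. unfold pc, ppts; simpl.
      apply in_or_app. right. left. reflexivity.
    + exists pc. split. left; reflexivity. intros x Hx. unfold pc, ppts; simpl. apply in_or_app. left. assumption.
    + unfold sumlen. simpl. unfold plen, pc, ppts; simpl.
      rewrite (path_split acc v1 [starf (g v1) te]). rewrite path_len_cons2. simpl (path_len [_]). lra.
  - destruct (Nat.eq_dec (g v1) (g w)) as [Eg|Ng].
    + destruct (IH w (acc ++ [v1]) ts te) as [PS [H1 [H2 [H3 [H4 H5]]]]]; auto.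
      * intros x Hx. apply HV. right. assumption.
      * intro E. apply app_eq_nil in E. tauto.
      * rewrite hd_app by assumption. rewrite <- Eg. assumption.
      * exists PS. split; [auto|split; [|split; [|split]]].
        -- intros pc i Hpc. destruct (H2 pc i Hpc) as [x [Hx Ex]]. exists x. split. right. auto. auto.
        -- intros x [<-|Hx]. destruct H4 as [pc [Hpc Hacc']]. exists pc. rewrite Eg. split. auto.
           apply Hacc'. apply in_or_app. right. left. reflexivity. auto.
        -- destruct H4 as [pc [Hpc Hacc']]. exists pc. rewrite Eg. split. auto.
           intros x Hx. apply Hacc'. apply in_or_app. left. auto.
        -- rewrite <- app_assoc in H5. simpl app in H5. simpl last. destruct l''; exact H5.
    + destruct (Hcross v1 w) as [tv [tw [Htv [Htw Hd]]]]; auto.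
      apply HV; left; reflexivity. apply HV; right; left; reflexivity.
      destruct (IH w [starf (g w) tw] tw te) as [PS [H1 [H2 [H3 [H4 H5]]]]]; auto.
      * intros x Hx. apply HV. right. assumption.
      * congruence.
      * set (pc := (acc ++ [v1; starf (g v1) tv], ts, tv)).
        exists ((pc, g v1) :: PS). split; [|split; [|split; [|split]]].
        -- intros pc' i [E|Hin]. 2: auto. injection E as <- <-. unfold valid, pc, ppts, pstart, pend; simpl.
           repeat split; try lra.
           ++ intro E. apply app_eq_nil in E. tauto.
           ++ rewrite hd_app by assumption. assumption.
           ++ replace (acc ++ [v1; starf (g v1) tv]) with ((acc ++ [v1]) ++ [starf (g v1) tv]) by (rewrite <- app_assoc; reflexivity).
              apply last_last.
        -- intros pc' i [E|Hin]. injection E as <- <-. exists v1. split. left; reflexivity. reflexivity.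
           destruct (H2 pc' i Hin) as [x [Hx Ex]]. exists x. split. right. auto. auto.
        -- intros x [<-|Hx]. exists pc. split. left; reflexivity. unfold pc, ppts; simpl.
           apply in_or_app. right. left. reflexivity.
           destruct (H3 x Hx) as [pc' [Hpc' Hx']]. exists pc'. split. right. auto. auto.
        -- exists pc. split. left; reflexivity. intros x Hx. unfold pc, ppts; simpl. apply in_or_app. left. assumption.
        -- replace (last (v1 :: w :: l'') d0) with (last (w :: l'') d0) by reflexivity.
           set (z := last (w :: l'') d0) in *.
           cbn [map]. rewrite sumlen_cons. unfold plen at 1, pc, ppts; simpl.
           rewrite (path_split acc v1 [starf (g v1) tv]). rewrite path_len_cons2. simpl (path_len [_]).
           rewrite (path_split acc v1 (w :: l'')). rewrite path_len_cons2.
           simpl app in H5. rewrite path_len_cons2 in H5.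
           rewrite (dist_sym (starf (g w) tw) w) in Hd. rewrite (dist_sym (starf (g w) tw) w) in H5. lra.
Qed.

End Build.

Fixpoint pos (x : pt) (l : list pt) : nat :=
  match l with [] => 0%nat | y :: l' => if pt_eq_dec x y then 0%nat else S (pos x l') end.

Lemma pos_nth x l : In x l -> nth (pos x l) l d0 = x /\ (pos x l < length l)%nat.
Proof.
  induction l as [|y l IH]; simpl. intros [].
  intros H. destruct (pt_eq_dec x y) as [->|ne]. split; [reflexivity|lia].
  destruct H as [->|H]. congruence. destruct (IH H). split. assumption. lia.
Qed.

Lemma pos_of_nth l j : NoDup l -> (j < length l)%nat -> pos (nth j l d0) l = j.
Proof.
  revert j. induction l as [|y l IH]; intros j N Hj; simpl in *. lia.
  inversion N; subst. destruct j as [|j].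
  - destruct (pt_eq_dec y y); congruence.
  - destruct (pt_eq_dec (nth j l d0) y) as [E|ne].
    + exfalso. apply H1. rewrite <- E. apply nth_In. lia.
    + f_equal. apply IH; auto. lia.
Qed.

Lemma divN N p : (1 <= N)%nat -> p = (N * (p / N) + p mod N)%nat /\ (p mod N < N)%nat.
Proof. intros. split. apply Nat.div_mod_eq. apply Nat.mod_upper_bound. lia. Qed.

Lemma mono_gen (theta : pt -> R) l : StronglySorted (fun a b => theta a <= theta b) l ->
  forall i j, (i <= j)%nat -> (j < length l)%nat -> theta (nth i l d0) <= theta (nth j l d0).
Proof.
  induction l as [|a l IH]; intros Hs i j Hij Hj; simpl in *. lia.
  inversion Hs; subst.
  destruct i as [|i]; destruct j as [|j].
  - lra.
  - rewrite Forall_forall in H2. apply H2. apply nth_In. lia.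
  - lia.
  - apply IH; auto; lia.
Qed.

Section Groups.
Variable u : list pt.
Variable theta : pt -> R.
Variable N : nat.
Hypothesis HN : (1 <= N)%nat.
Hypothesis Hnd : NoDup u.
Hypothesis Hsort : StronglySorted (fun a b => theta a <= theta b) u.
Hypothesis Hth : forall x, In x u -> 0 <= theta x < 2 * PI.

Definition nn := length u.
Definition mm := ceil_div nn N.

Lemma mono i j : (i <= j)%nat -> (j < length u)%nat -> theta (nth i u d0) <= theta (nth j u d0).
Proof. apply mono_gen. assumption. Qed.

Lemma mm_spec : (nn <= mm * N)%nat /\ forall i, (i < mm)%nat <-> (i * N < nn)%nat.
Proof.
  unfold mm, ceil_div. destruct (divN N (nn + N - 1) HN) as [E1 E2].
  set (q := ((nn + N - 1) / N)%nat) in *. set (r := ((nn + N - 1) mod N)%nat) in *.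
  split. nia. intros i. split; intro h; nia.
Qed.

Definition gamma (i : nat) : R :=
  if Nat.eqb i 0 then 0 else if Nat.leb mm i then 2 * PI else theta (nth (i * N - 1) u d0).

Definition gidx (v : pt) : nat := (pos v u / N + 1)%nat.

Lemma gamma_range i : 0 <= gamma i <= 2 * PI.
Proof.
  unfold gamma. destruct (Nat.eqb i 0). pose proof PI_RGT_0. lra.
  destruct (Nat.leb_spec mm i). pose proof PI_RGT_0. lra.
  destruct mm_spec as [_ Hm]. apply Hm in H.
  assert (In (nth (i * N - 1) u d0) u) by (apply nth_In; unfold nn in H; lia).
  specialize (Hth _ H0). lra.
Qed.

Lemma gidx_range v : In v u -> (1 <= gidx v <= mm)%nat.
Proof.
  intros Hv. destruct (pos_nth v u Hv) as [_ Hp]. unfold gidx.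
  destruct mm_spec as [_ Hm].
  destruct (divN N (pos v u) HN) as [E1 E2].
  assert (pos v u / N < mm)%nat. { apply Hm. unfold nn. nia. }
  lia.
Qed.

Lemma gidx_theta v : In v u -> gamma (gidx v - 1) <= theta v <= gamma (gidx v).
Proof.
  intros Hv. destruct (pos_nth v u Hv) as [Ev Hp]. unfold gidx.
  destruct mm_spec as [_ Hm].
  destruct (divN N (pos v u) HN) as [E1 E2].
  set (p := pos v u) in *. set (q := (p / N)%nat) in *.
  assert (Hq : (q < mm)%nat). { apply Hm. unfold nn. nia. }
  replace (q + 1 - 1)%nat with q by lia.
  split.
  - unfold gamma. destruct (Nat.eqb_spec q 0). apply Hth; auto.
    destruct (Nat.leb_spec mm q). lia.
    rewrite <- Ev. apply mono. nia. lia.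
  - unfold gamma. destruct (Nat.eqb_spec (q + 1) 0). lia.
    destruct (Nat.leb_spec mm (q + 1)). specialize (Hth v Hv). lra.
    rewrite <- Ev. apply mono. nia. assert ((q+1) * N < nn)%nat by (apply Hm; lia). unfold nn in *. nia.
Qed.

Lemma gamma_order i j : (1 <= i)%nat -> (i < j)%nat -> (j <= mm)%nat -> gamma i <= gamma (j - 1).
Proof.
  intros h1 h2 h3. destruct mm_spec as [_ Hm]. unfold gamma.
  destruct (Nat.eqb_spec i 0). lia. destruct (Nat.eqb_spec (j - 1) 0). lia.
  destruct (Nat.leb_spec mm i). lia. destruct (Nat.leb_spec mm (j - 1)). lia.
  apply mono. nia. assert ((j - 1) * N < nn)%nat by (apply Hm; lia). unfold nn in *. nia.
Qed.

Lemma group_in i v : In v (group u N i) -> (1 <= i)%nat -> gidx v = i /\ In v u.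
Proof.
  intros Hv Hi. unfold group in Hv.
  destruct (In_nth _ _ d0 Hv) as [q [Hq Eq]].
  rewrite length_firstn, length_skipn in Hq.
  rewrite nth_firstn in Eq. destruct (Nat.ltb_spec q N); [|lia].
  rewrite nth_skipn in Eq.
  assert (Hlt : ((i - 1) * N + q < length u)%nat) by lia.
  split.
  - unfold gidx. rewrite <- Eq. rewrite pos_of_nth by auto.
    rewrite Nat.div_add_l by lia. rewrite Nat.div_small by lia. lia.
  - rewrite <- Eq. apply nth_In. assumption.
Qed.

Lemma group_nodup i : NoDup (group u N i).
Proof.
  unfold group. pose proof Hnd as H. rewrite <- (firstn_skipn ((i - 1) * N) u) in H.
  apply NoDup_app_remove_l in H. rewrite <- (firstn_skipn N (skipn ((i - 1) * N) u)) in H.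
  apply NoDup_app_remove_r in H. assumption.
Qed.

Lemma concat_groups_aux m : forall l : list pt, (length l <= m * N)%nat ->
  concat (map (fun i => firstn N (skipn (i * N) l)) (seq 0 m)) = l.
Proof.
  induction m as [|m IH]; intros l Hl.
  - simpl in *. destruct l; simpl in *; [reflexivity|lia].
  - rewrite <- cons_seq. rewrite <- seq_shift. cbn [map concat]. rewrite map_map.
    simpl (0 * N)%nat. rewrite skipn_O.
    replace (map (fun x => firstn N (skipn (S x * N) l)) (seq 0 m))
      with (map (fun x => firstn N (skipn (x * N) (skipn N l))) (seq 0 m)).
    + rewrite IH. apply firstn_skipn. rewrite length_skipn. simpl in Hl. lia.
    + apply map_ext. intros x. rewrite skipn_skipn. f_equal. f_equal. simpl. lia.
Qed.

Lemma concat_groups : concat (map (group u N) (seq 1 mm)) = u.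
Proof.
  rewrite <- seq_shift, map_map. unfold group.
  replace (map (fun x => firstn N (skipn ((S x - 1) * N) u)) (seq 0 mm))
    with (map (fun x => firstn N (skipn (x * N) u)) (seq 0 mm)).
  apply concat_groups_aux. destruct mm_spec. unfold nn in *. lia.
  apply map_ext. intros x. simpl. rewrite Nat.sub_0_r. reflexivity.
Qed.

End Groups.

Lemma fold_max_ge {A} (f : A -> R) l x : In x l -> f x <= fold_right Rmax 0 (map f l).
Proof.
  induction l as [|a l IH]; simpl. intros [].
  intros [<-|H]. apply Rmax_l. eapply Rle_trans. apply IH; auto. apply Rmax_r.
Qed.

Lemma fold_max_nonneg {A} (f : A -> R) l : 0 <= fold_right Rmax 0 (map f l).
Proof. induction l; simpl. lra. eapply Rle_trans. apply IHl. apply Rmax_r. Qed.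

Lemma diam_ge O V v : In v V -> dist O v <= diam (O :: V).
Proof.
  intros Hv. unfold diam.
  eapply Rle_trans. 2: apply (fold_max_ge _ (O :: V) O); left; reflexivity.
  apply fold_max_ge. right. assumption.
Qed.

Lemma diam_nonneg l : 0 <= diam l.
Proof. apply fold_max_nonneg. Qed.

Lemma tour_cycle O p D : p <> [] -> (forall x, In x p -> dist O x <= D) ->
  tour_cost O p <= cycle_len p + 2 * D.
Proof.
  intros Hp HD. destruct p as [|a t]. congruence.
  unfold tour_cost. rewrite (cycle_formula _ d0 Hp).
  change (O :: (a :: t) ++ [O]) with (O :: a :: t ++ [O]). rewrite path_len_cons2.
  change (a :: t ++ [O]) with ((a :: t) ++ [O]).
  rewrite (path_app2 (a :: t) [O] d0 Hp) by congruence. simpl (hd d0 _). simpl (path_len [O]).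
  pose proof (dist_tri (last (a :: t) d0) a O). rewrite (dist_sym a O) in H.
  pose proof (HD a (or_introl eq_refl)). lra.
Qed.

Lemma tour_O O t : tour_cost O (O :: t) = cycle_len (O :: t).
Proof.
  unfold tour_cost, cycle_len. change (O :: (O :: t) ++ [O]) with (O :: O :: t ++ [O]).
  rewrite path_len_cons2, dist_refl. simpl app. lra.
Qed.

Lemma split_change (f : pt -> nat) (l : list pt) x y : In x l -> In y l -> f x <> f y ->
  exists l1 l2, l = l1 ++ l2 /\ l1 <> [] /\ l2 <> [] /\ f (last l1 d0) <> f (hd d0 l2).
Proof.
  revert x y. induction l as [|a l IH]; intros x y Hx Hy Hf. destruct Hx.
  destruct l as [|b l].
  - destruct Hx as [<-|[]]. destruct Hy as [<-|[]]. congruence.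
  - destruct (Nat.eq_dec (f a) (f b)) as [E|Ne].
    + assert (exists z, In z (b :: l) /\ f z <> f b) as [z [Hz Hzb]].
      { destruct (Nat.eq_dec (f x) (f b)).
        - exists y. split. destruct Hy as [<-|Hy]. congruence. assumption. congruence.
        - exists x. split. destruct Hx as [<-|Hx]. congruence. assumption. assumption. }
      destruct (IH b z (or_introl eq_refl) Hz (fun e => Hzb (eq_sym e))) as [l1 [l2 [E1 [N1 [N2 Hc]]]]].
      exists (a :: l1), l2. split. rewrite E1. reflexivity. split. congruence. split. assumption.
      destruct l1. congruence. simpl (last (a :: _ :: _) d0). exact Hc.
    + exists [a], (b :: l). repeat split; simpl; congruence.
Qed.

Lemma sum_concat (f : pt -> R) (L : list (list pt)) :
  sumR (map f (concat L)) = sumR (map (fun l => sumR (map f l)) L).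
Proof.
  induction L as [|l L IH]; simpl. reflexivity.
  rewrite map_app, sumR_app, IH. reflexivity.
Qed.

Lemma sum_indicator t c a n : sumR (map (fun i => if Nat.eqb t i then c else 0) (seq a n)) =
  if andb (Nat.leb a t) (Nat.ltb t (a + n)) then c else 0.
Proof.
  revert a. induction n as [|n IH]; intros a.
  - unfold sumR. simpl. destruct (Nat.leb_spec a t); destruct (Nat.ltb_spec t (a + 0)); simpl; try lra; lia.
  - cbn [seq]. rewrite sumR_map_cons, IH.
    destruct (Nat.eqb_spec t a) as [->|ne].
    + destruct (Nat.leb_spec (S a) a); [lia|]. simpl. rewrite Nat.leb_refl.
      destruct (Nat.ltb_spec a (a + S n)); [|lia]. simpl. lra.
    + destruct (Nat.leb_spec (S a) t); destruct (Nat.leb_spec a t); destruct (Nat.ltb_spec t (S a + n));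
        destruct (Nat.ltb_spec t (a + S n)); simpl; try lra; lia.
Qed.

Lemma sum_filter_tags (PS : list (piece * nat)) m :
  (forall q, In q PS -> (1 <= snd q <= m)%nat) ->
  sumR (map (fun i => sumlen (map fst (filter (fun q => Nat.eqb (snd q) i) PS))) (seq 1 m))
  = sumlen (map fst PS).
Proof.
  induction PS as [|q PS IH]; intros H.
  - simpl. unfold sumlen. simpl. induction (seq 1 m); unfold sumR in *; simpl in *; lra.
  - replace (map (fun i => sumlen (map fst (filter (fun q0 => Nat.eqb (snd q0) i) (q :: PS)))) (seq 1 m))
      with (map (fun i => (if Nat.eqb (snd q) i then plen (fst q) else 0) +
                sumlen (map fst (filter (fun q0 => Nat.eqb (snd q0) i) PS))) (seq 1 m)).
    + rewrite sumR_map_plus, sum_indicator, IH by (intros; apply H; right; auto).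
      destruct (H q (or_introl eq_refl)). cbn [map]. rewrite sumlen_cons.
      destruct (Nat.leb_spec 1 (snd q)); [|lia]. destruct (Nat.ltb_spec (snd q) (1 + m)); [|lia]. simpl. lra.
    + apply map_ext. intros i. simpl. destruct (Nat.eqb_spec (snd q) i).
      * simpl. rewrite sumlen_cons. reflexivity.
      * simpl. lra.
Qed.

Lemma per_group O k M W Si w : (1 <= M)%nat -> (1 <= k)%nat -> NoDup W ->
  is_approx_solution (1 + 1 / INR M) W O k Si -> (forall x, In x W -> In x w) ->
  sol_cost O Si <= (1 + 1 / INR M) * (tour_cost O w + 2 / INR k * sumR (map (dist O) W)).
Proof.
  intros HM Hk HW [Hsol Happ] Hcov.
  destruct (shortcut O W w HW Hcov) as [c [Hp Hc]].
  destruct (TP O k Hk W c HW Hp) as [S' [HS' Hcost]].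
  specialize (Happ S' HS').
  assert (0 <= 1 + 1 / INR M).
  { assert (0 < INR M) by (apply lt_0_INR; lia). assert (0 < 1 / INR M) by (apply Rdiv_lt_0_compat; lra). lra. }
  eapply Rle_trans. apply Happ. apply Rmult_le_compat_l. assumption. lra.
Qed.

Lemma polar_ray O V theta v : is_polar_angle O V theta -> In v V -> v = ray O (theta v) (dist O v).
Proof.
  intros H Hv. destruct (H v Hv) as [_ [E1 E2]]. unfold ray. rewrite <- E1, <- E2.
  destruct v; reflexivity.
Qed.

Lemma key_many (O : pt) (V u : list pt) (theta : pt -> R) (N : nat) (D T0 : R) (p : list pt) :
  (1 <= N)%nat -> NoDup V -> Permutation V u ->
  StronglySorted (fun a b => theta a <= theta b) u -> is_polar_angle O V theta ->
  (2 <= mm u N)%nat -> Permutation V p -> cycle_len p = T0 ->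
  (forall v, In v V -> dist O v <= D) -> 0 <= D ->
  exists X : nat -> R,
    (forall i, (1 <= i <= mm u N)%nat -> exists w, (forall x, In x (group u N i) -> In x w) /\ tour_cost O w <= X i) /\
    sumR (map X (seq 1 (mm u N))) <= T0 + 4 * D * INR (mm u N).
Proof.
  intros HN HV Hperm Hsort Hpol Hm Hp HT0 HD HD0.
  assert (Hnd : NoDup u) by (apply (Permutation_NoDup Hperm HV)).
  assert (HuV : forall x, In x u -> In x V) by (intros x Hx; apply (Permutation_in _ (Permutation_sym Hperm) Hx)).
  assert (Hth : forall x, In x u -> 0 <= theta x < 2 * PI) by (intros x Hx; apply (Hpol x (HuV x Hx))).
  set (m := mm u N) in *.
  set (g := gidx u N).
  set (starf := fun i t => star O (gamma u theta N (i - 1)) (gamma u theta N i) t).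
  assert (HVu : forall x, In x V -> In x u) by (intros x Hx; apply (Permutation_in _ Hperm Hx)).
  assert (Hcross : forall v w, In v V -> In w V -> g v <> g w ->
    exists tv tw, -D <= tv <= D /\ -D <= tw <= D /\
      dist v (starf (g v) tv) + dist (starf (g w) tw) w <= dist v w).
  { assert (Hlt : forall v w, In v V -> In w V -> (g v < g w)%nat ->
      exists tv tw, -D <= tv <= D /\ -D <= tw <= D /\
        dist v (starf (g v) tv) + dist (starf (g w) tw) w <= dist v w).
    { intros v w Hv Hw Hvw.
      pose proof (gidx_theta u theta N HN Hsort Hth v (HVu v Hv)) as [Tv1 Tv2].
      pose proof (gidx_theta u theta N HN Hsort Hth w (HVu w Hw)) as [Tw1 Tw2].
      pose proof (gidx_range u N HN v (HVu v Hv)). pose proof (gidx_range u N HN w (HVu w Hw)).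
      pose proof (gamma_order u theta N HN Hsort (g v) (g w) ltac:(unfold g in *; lia) Hvw ltac:(unfold g, m in *; lia)).
      pose proof (gamma_range u theta N HN Hth (g v - 1)). pose proof (gamma_range u theta N HN Hth (g w)).
      pose proof (Hth w (HVu w Hw)).
      destruct (crossing O (dist O v) (dist O w) (theta v) (theta w)
        (gamma u theta N (g v - 1)) (gamma u theta N (g v)) (gamma u theta N (g w - 1)) (gamma u theta N (g w)) D)
        as [tv [tw [K1 [K2 K3]]]]; try (unfold g in *; lra).
      split. apply dist_nonneg. apply HD; auto.
      split. apply dist_nonneg. apply HD; auto.
      exists tv, tw. split. assumption. split. assumption.
      rewrite <- !(polar_ray O V theta v Hpol Hv), <- !(polar_ray O V theta w Hpol Hw) in K3.
      exact K3. }
    intros v w Hv Hw Hne. destruct (Nat.lt_gt_cases (g v) (g w)) as [[c|c] _]. lia.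
    - apply Hlt; auto.
    - destruct (Hlt w v Hw Hv c) as [tw [tv [H1 [H2 H3]]]]. exists tv, tw. split. auto. split. auto.
      rewrite (dist_sym v w), (dist_sym v), (dist_sym _ w). lra. }
  destruct (mm_spec u N HN) as [_ Hmm].
  assert (HNlt : (N < length u)%nat) by (assert (1 * N < nn u)%nat by (apply Hmm; unfold m in *; lia); unfold nn in *; lia).
  set (x0 := nth 0 u d0). set (x1 := nth N u d0).
  assert (Hx0 : In x0 p) by (apply (Permutation_in _ Hp), HuV, nth_In; lia).
  assert (Hx1 : In x1 p) by (apply (Permutation_in _ Hp), HuV, nth_In; lia).
  assert (Hg01 : g x0 <> g x1).
  { unfold g, gidx, x0, x1. rewrite !pos_of_nth by (auto; lia).
    rewrite Nat.Div0.div_0_l, Nat.div_same by lia. lia. }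
  destruct (split_change g p x0 x1 Hx0 Hx1 Hg01) as [l1 [l2 [Ep [N1 [N2 Hc]]]]].
  set (p' := l2 ++ l1).
  assert (Hp' : Permutation V p') by (unfold p'; eapply Permutation_trans; [exact Hp|]; rewrite Ep; apply Permutation_app_comm).
  assert (HT0' : cycle_len p' = T0) by (unfold p'; rewrite <- HT0, Ep; apply cycle_len_rot; auto).
  destruct l2 as [|v1 rest]. congruence.
  assert (Hlast : last p' d0 = last l1 d0) by (unfold p'; apply last_app; auto).
  assert (Hp'V : forall x, In x p' -> In x V) by (intros x Hx; apply (Permutation_in _ (Permutation_sym Hp') Hx)).
  destruct (Hcross (last l1 d0) v1) as [tL [t0 [HtL [Ht0 HdL]]]].
  { apply Hp'V. unfold p'. apply in_or_app. right.
    destruct (list_last_dec l1) as [->|[l1' [z ->]]]. congruence. rewrite last_last. apply in_or_app. right. left. reflexivity. }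
  { apply Hp'V. left. reflexivity. }
  { simpl in Hc. exact Hc. }
  destruct (build V g starf D Hcross (rest ++ l1) v1 [starf (g v1) t0] t0 tL) as [PS [H1 [H2 [H3 [H4 H5]]]]]; auto.
  all: try congruence.
  assert (HPS : sumlen (map fst PS) <= T0).
  { rewrite <- HT0'. change p' with (v1 :: rest ++ l1) in Hlast |- *.
    assert (E : v1 :: rest ++ l1 = p') by reflexivity.
    rewrite (cycle_formula _ d0) by congruence. simpl (hd d0 _).
    change ([starf (g v1) t0] ++ v1 :: rest ++ l1) with (starf (g v1) t0 :: v1 :: rest ++ l1) in H5.
    rewrite path_len_cons2 in H5. rewrite Hlast in H5 |- *.
    rewrite (dist_sym (starf (g v1) t0) v1) in H5. rewrite (dist_sym (starf (g v1) t0) v1) in HdL. lra. }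
  set (F := fun i => map fst (filter (fun q => Nat.eqb (snd q) i) PS)).
  exists (fun i => sumlen (F i) + 4 * D). split.
  - intros i Hi.
    set (Op := ([O], 0, 0) : piece).
    assert (HPi : forall x y, dist (starf i x) (starf i y) <= Rabs (x - y)) by (intros; apply star_dist).
    destruct (merge_aux (starf i) HPi (length (F i)) (Op :: F i) (-D) (-D) D) as [w [Nw [Cw Lw]]].
    + reflexivity.
    + intros pc [<-|Hpc].
      * unfold valid, Op, ppts, pstart, pend; simpl. unfold starf. rewrite star0. repeat split; try lra. congruence.
      * unfold F in Hpc. apply in_map_iff in Hpc. destruct Hpc as [[pc' j] [E Hq]]. simpl in E. subst pc'.
        apply filter_In in Hq. destruct Hq as [Hq Ej]. simpl in Ej. apply Nat.eqb_eq in Ej. subst j.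
        apply (H1 pc i Hq).
    + exists Op, (F i). split. apply Permutation_refl. split.
      * intros pc Hpc. unfold F in Hpc. apply in_map_iff in Hpc. destruct Hpc as [[pc' j] [E Hq]]. simpl in E. subst pc'.
        apply filter_In in Hq. destruct Hq as [Hq Ej]. simpl in Ej. apply Nat.eqb_eq in Ej. subst j.
        destruct (H1 pc i Hq) as [_ [_ [_ [A1 A2]]]]. lra.
      * left. unfold Op, pstart; simpl. lra.
    + assert (HO : In O w) by (apply (Cw Op); [left; reflexivity|unfold Op, ppts; simpl; left; reflexivity]).
      destruct (in_split O w HO) as [w1 [w2 Ew]].
      exists (O :: w2 ++ w1). split.
      * intros x Hx. destruct (group_in u N HN Hnd i x Hx ltac:(lia)) as [Egx Hxu].
        assert (Hxp : In x (v1 :: rest ++ l1)).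
        { change (v1 :: rest ++ l1) with p'. apply (Permutation_in _ Hp'). apply HuV. assumption. }
        destruct (H3 x Hxp) as [pc [Hpc Hxpc]].
        assert (Hxw : In x w).
        { apply (Cw pc). right. unfold F. apply in_map_iff. exists (pc, g x). split. reflexivity.
          apply filter_In. split. assumption. simpl. apply Nat.eqb_eq. unfold g. assumption. assumption. }
        rewrite Ew in Hxw. apply in_app_or in Hxw. simpl. rewrite in_app_iff.
        destruct Hxw as [h|[h|h]]; auto.
      * rewrite tour_O.
        assert (cycle_len (O :: w2 ++ w1) = cycle_len w).
        { rewrite Ew. destruct w1 as [|a w1]. rewrite app_nil_r. reflexivity.
          change (O :: w2 ++ a :: w1) with ((O :: w2) ++ a :: w1). apply cycle_len_rot; congruence. }
        rewrite H. unfold sumlen in Lw. simpl in Lw. fold (sumlen (F i)) in Lw.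
        unfold plen, Op, ppts in Lw. simpl in Lw. lra.
  - rewrite sumR_map_plus. unfold F. rewrite sum_filter_tags.
    + rewrite sumR_map_const, length_seq. lra.
    + intros [pc j] Hq. simpl. destruct (H2 pc j Hq) as [x [Hx Ex]].
      subst j. apply (gidx_range u N HN). apply HVu. apply Hp'V. exact Hx.
Qed.

Theorem theorem6 (V : list pt) (O : pt) (k M : nat)
  (HV : NoDup V) (Hk : (1 <= k)%nat) (HM : (1 <= M)%nat)
  (theta : pt -> R) (Htheta : is_polar_angle O V theta)
  (u : list pt) (Hperm : Permutation V u)
  (Hsorted : Sorted (fun a b => theta a <= theta b) u)
  (S : nat -> list (list pt))
  (HS : forall i, (1 <= i <= ceil_div (length V) (M * k))%nat ->
          is_approx_solution (1 + 1 / INR M) (group u (M * k) i) O k (S i))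
  (T0 : R) (HT0 : is_min_tsp V T0) :
  union_cost O S (ceil_div (length V) (M * k)) <=
    (1 + 1 / INR M) *
    (T0 + rad_inf O V k
     + 3 * PI * diam (O :: V) / 2 * INR (ceil_div (length V) (M * k))).
Proof.
  assert (HN : (1 <= M * k)%nat) by nia.
  assert (Em : ceil_div (length V) (M * k) = mm u (M * k)) by (unfold mm, nn; rewrite (Permutation_length Hperm); reflexivity).
  rewrite Em in HS |- *.
  set (N := (M * k)%nat) in *. set (m := mm u N) in *.
  set (D := diam (O :: V)).
  assert (HD : forall v, In v V -> dist O v <= D) by (intros; apply diam_ge; auto).
  assert (HD0 : 0 <= D) by apply diam_nonneg.
  assert (Hnd : NoDup u) by (apply (Permutation_NoDup Hperm HV)).
  assert (HSS : StronglySorted (fun a b => theta a <= theta b) u).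
  { apply Sorted_StronglySorted. intros a b c; lra. assumption. }
  destruct HT0 as [[p [Hp Hcl]] _].
  assert (HT0pos : 0 <= T0) by (rewrite <- Hcl; apply cycle_len_nonneg).
  assert (Key : exists X : nat -> R,
    (forall i, (1 <= i <= m)%nat -> exists w, (forall x, In x (group u N i) -> In x w) /\ tour_cost O w <= X i) /\
    sumR (map X (seq 1 m)) <= T0 + 4 * D * INR m).
  { destruct (Nat.lt_ge_cases m 2) as [Hm|Hm].
    - destruct (Nat.lt_ge_cases m 1) as [Hm0|Hm1].
      + exists (fun _ => 0). split. intros i Hi. lia.
        replace m with 0%nat by lia. simpl. unfold sumR. simpl. lra.
      + exists (fun _ => T0 + 2 * D). split.
        * intros i Hi. exists p. split.
          -- intros x Hx. destruct (group_in u N HN Hnd i x Hx ltac:(lia)) as [_ Hxu].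
             apply (Permutation_in _ Hp). apply (Permutation_in _ (Permutation_sym Hperm)). assumption.
          -- rewrite <- Hcl. apply tour_cycle.
             ++ intro E. subst p. apply Permutation_sym, Permutation_nil in Hp. subst V.
                apply Permutation_nil in Hperm. subst u.
                unfold m, mm, nn, ceil_div in *. simpl in Hm1.
                replace (N - 1)%nat with (N - 1)%nat in Hm1 by reflexivity.
                rewrite Nat.div_small in Hm1 by lia. lia.
             ++ intros x Hx. apply HD. apply (Permutation_in _ (Permutation_sym Hp)). assumption.
        * replace m with 1%nat by lia. simpl. unfold sumR. simpl. lra.
    - apply (key_many O V u theta N D T0 p); auto. }
  destruct Key as [X [HX HXs]].
  assert (HMpos : 0 <= 1 + 1 / INR M).
  { assert (0 < INR M) by (apply lt_0_INR; lia). assert (0 < 1 / INR M) by (apply Rdiv_lt_0_compat; lra). lra. }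
  unfold union_cost. fold (sumR (map (fun i => sol_cost O (S i)) (seq 1 m))).
  eapply Rle_trans.
  { apply (sumR_map_le _ (fun i => (1 + 1 / INR M) * (X i + 2 / INR k * sumR (map (dist O) (group u N i))))).
    intros i Hi. apply in_seq in Hi. destruct (HX i ltac:(lia)) as [w [Hcov Hw]].
    eapply Rle_trans. apply (per_group O k M (group u N i) (S i) w HM Hk (group_nodup u N Hnd i) (HS i ltac:(lia)) Hcov).
    apply Rmult_le_compat_l. assumption. lra. }
  rewrite sumR_map_scal, sumR_map_plus, sumR_map_scal.
  assert (Hrad : sumR (map (fun i => sumR (map (dist O) (group u N i))) (seq 1 m)) = sumR (map (dist O) V)).
  { rewrite <- (map_map (group u N) (fun l => sumR (map (dist O) l))).
    rewrite <- sum_concat. unfold m. rewrite concat_groups by assumption.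
    symmetry. apply sumR_perm. apply Permutation_map. assumption. }
  rewrite Hrad. unfold rad_inf. fold (sumR (map (dist O) V)).
  apply Rmult_le_compat_l. assumption.
  assert (Hpi : 3 < PI) by (pose proof PI2_3_2; lra).
  assert (0 <= D * INR m) by (apply Rmult_le_pos; [assumption|apply pos_INR]).
  assert (4 * D * INR m <= 3 * PI * D / 2 * INR m) by nra.
  lra.
Qed.
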